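(* Let $\mathbf A$ be an additive category, ${\tt G}$ a digraph, $P\subseteq SG({\tt G})$ a squared and faithful sub-poset, and $\epsilon$ a sign assignment on $P$. For any covariant functor $\mathcal F\colon\mathbf P\to\mathbf A$ define \[C^n_{\mathcal F}(P)=\bigoplus_{{\tt H}\in P,\ \ell({\tt H})=n}\mathcal F({\tt H}),\qquad d^n=\sum_{{\tt H}\in P,\ \ell({\tt H})=n}\ \sum_{{\tt H}'\in P,\ {\tt H}\prec{\tt H}'}(-1)^{\epsilon({\tt H},{\tt H}')}\mathcal F({\tt H}\prec{\tt H}').\] Then $d^n\circ d^{n-1}=0$ for every $n\in\mathbb N$; in particular $(C^*_{\mathcal F}(P),d^* )$ is a cochain complex.
   Context: A digraph ${\tt G}=(V,E)$ has finite $V$ and $E\subseteq(V\times V)\setminus\{(v,v)\}$. $SG({\tt G})$ is the poset of all subgraphs ${\tt H}$ of ${\tt G}$ ($V({\tt H})\subseteq V({\tt G})$, $E({\tt H})\subseteq E({\tt G})$, ${\tt H}$ a digraph) ordered by being a proper subgraph. For a poset, $x\,\tilde\triangleleft\,y$ ($y$ covers $x$) means $x\triangleleft y$ with no $z$ strictly between. A sub-poset $S'$ of $S$ (with induced order) is faithful if its covering relation equals the restriction to $S'$ of the covering relation of $S$; it is squared if for any $x,y,z\in S'$ with $x\,\tilde\triangleleft\,y\,\tilde\triangleleft\,z$ there is a unique $y'\neq y$ with $x\,\tilde\triangleleft\,y'\,\tilde\triangleleft\,z$ (such $x,y,y',z$ form a square). A sign assignment on a poset is a choice of $\epsilon_{x,y}\in\mathbb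 Z_2$ for each covering pair $x\,\tilde\triangleleft\,y$ such that $\epsilon_{x,y}+\epsilon_{y,z}\equiv\epsilon_{x,y'}+\epsilon_{y',z}+1\pmod 2$ for every square. In the formulas, ${\tt H}\prec{\tt H}'$ denotes the covering relation in $P$. The level of ${\tt H}\in P$ is $\ell({\tt H})=\#E({\tt H})+\#V({\tt H})-\min\{\#E({\tt H}')+\#V({\tt H}')\mid{\tt H}'\in P\}$. $\mathbf P$ is the category with objects the elements of $P$ and a unique morphism $x\to y$ iff $x\le y$. *)

(* Defs.v *)
From HB Require Import structures.
From mathcomp Require Import all_boot all_algebra.

Set Implicit Arguments.
Unset Strict Implicit.
Unset Printing Implicit Defensive.
Import GRing.Theory.
Local Open Scope ring_scope.

(* (indexed by an arbitrary finite type; the empty biproduct is the    *)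
(* zero object).                                                       *)
Record AddCat : Type := MkAddCat {
  Ob : Type;
  Mor : Ob -> Ob -> zmodType;
  mcomp : forall a b c : Ob, Mor b c -> Mor a b -> Mor a c;
  idm : forall a : Ob, Mor a a;
  compA : forall a b c d (h : Mor c d) (g : Mor b c) (f : Mor a b),
      mcomp h (mcomp g f) = mcomp (mcomp h g) f;
  comp1m : forall a b (f : Mor a b), mcomp (idm b) f = f;
  compm1 : forall a b (f : Mor a b), mcomp f (idm a) = f;
  comp_addl : forall a b c (g g' : Mor b c) (f : Mor a b),
      mcomp (g + g') f = mcomp g f + mcomp g' f;
  comp_addr : forall a b c (g : Mor b c) (f f' : Mor a b),
      mcomp g (f + f') = mcomp g f + mcomp g f';
  biprod : forall I : finType, (I -> Ob) -> Ob;
  bp_inj : forall (I : finType) (X : I -> Ob) (i : I), Mor (X i) (biprod X);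
  bp_proj : forall (I : finType) (X : I -> Ob) (i : I), Mor (biprod X) (X i);
  bp_proj_inj : forall (I : finType) (X : I -> Ob) (i : I),
      mcomp (bp_proj X i) (bp_inj X i) = idm (X i);
  bp_proj_inj0 : forall (I : finType) (X : I -> Ob) (i j : I),
      i != j -> mcomp (bp_proj X i) (bp_inj X j) = 0;
  bp_sum : forall (I : finType) (X : I -> Ob),
      \sum_(i : I) mcomp (bp_inj X i) (bp_proj X i) = idm (biprod X)
}.

Arguments Mor : clear implicits.
Arguments mcomp {_ _ _ _}.
Arguments idm {_}.
Arguments biprod {_ I}.
Arguments bp_inj {_ I} X i.
Arguments bp_proj {_ I} X i.

(* type V and edge set E (loops excluded by hypothesis).  A (candidate) *)
(* subgraph is a pair (vertex set, edge set).                          *)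
Definition sgraph (V : finType) := ({set V} * {set V * V})%type.

Definition is_subgraph (V : finType) (E : {set V * V}) (H : sgraph V) : bool :=
  (H.2 \subset E) && [forall e in H.2, (e.1 \in H.1) && (e.2 \in H.1)].

Definition SG (V : finType) (E : {set V * V}) : {set sgraph V} :=
  [set H | is_subgraph E H].

Definition sg_le (V : finType) (H H' : sgraph V) : bool :=
  (H.1 \subset H'.1) && (H.2 \subset H'.2).
Definition sg_lt (V : finType) (H H' : sgraph V) : bool :=
  sg_le H H' && (H != H').

Definition covers_in (V : finType) (S : {set sgraph V}) (x y : sgraph V) : bool :=
  [&& x \in S, y \in S, sg_lt x y & [forall z in S, ~~ (sg_lt x z && sg_lt z y)]].

Definition faithful (V : finType) (E : {set V * V}) (P : {set sgraph V}) : Prop :=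
  forall x y, x \in P -> y \in P -> covers_in P x y = covers_in (SG E) x y.

Definition squared (V : finType) (P : {set sgraph V}) : Prop :=
  forall x y z, covers_in P x y -> covers_in P y z ->
    exists! y', y' != y /\ covers_in P x y' /\ covers_in P y' z.

(* sign assignment, with values in Z_2 = bool (addition = xor) *)
Definition sign_assignment (V : finType) (P : {set sgraph V})
    (eps : sgraph V -> sgraph V -> bool) : Prop :=
  forall x y y' z, covers_in P x y -> covers_in P y z ->
    covers_in P x y' -> covers_in P y' z -> y != y' ->
    (eps x y (+) eps y z) = ~~ (eps x y' (+) eps y' z).

(* covariant functor from the thin category P to A:
   Fob on objects, Fmor x y h : F(x) -> F(y) for h : x <= y *)
Definition is_functor (A : AddCat) (V : finType) (P : {set sgraph V})
    (Fob : sgraph V -> Ob A)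
    (Fmor : forall x y : sgraph V, sg_le x y -> Mor A (Fob x) (Fob y)) : Prop :=
  (forall x (h : sg_le x x), x \in P -> Fmor x x h = idm (Fob x)) /\
  (forall x y z (hxy : sg_le x y) (hyz : sg_le y z) (hxz : sg_le x z),
      x \in P -> y \in P -> z \in P ->
      Fmor x z hxz = mcomp (Fmor y z hyz) (Fmor x y hxy)).

(* F applied to x -> y when x <= y (0 otherwise; never used then) *)
Definition Fmap (A : AddCat) (V : finType) (Fob : sgraph V -> Ob A)
    (Fmor : forall x y : sgraph V, sg_le x y -> Mor A (Fob x) (Fob y))
    (x y : sgraph V) : Mor A (Fob x) (Fob y) :=
  (if sg_le x y as b return sg_le x y = b -> Mor A (Fob x) (Fob y)
   then fun h => Fmor x y h else fun _ => 0) (erefl _).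

Definition gsize (V : finType) (H : sgraph V) : nat := (#|H.1| + #|H.2|)%N.
Definition minsize (V : finType) (P : {set sgraph V}) : nat :=
  \big[minn/(#|{: V}| + #|{: V * V}|)%N]_(H in P) gsize H.
Definition level (V : finType) (P : {set sgraph V}) (H : sgraph V) : nat :=
  (gsize H - minsize P)%N.

Definition lvl (V : finType) (P : {set sgraph V}) (n : nat) :=
  {H : sgraph V | (H \in P) && (level P H == n)}.

Definition sgn (Z : zmodType) (b : bool) (f : Z) : Z := if b then - f else f.

Definition cochain (A : AddCat) (V : finType) (P : {set sgraph V})
    (Fob : sgraph V -> Ob A) (n : nat) : Ob A :=
  biprod (fun H : lvl P n => Fob (val H)).

(* d^n : C^n -> C^{n+1}.  Every H' in P covering H has level n+1, so the
   inner sum over covers of H is taken inside C^{n+1}. *)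
Definition differential (A : AddCat) (V : finType) (P : {set sgraph V})
    (eps : sgraph V -> sgraph V -> bool) (Fob : sgraph V -> Ob A)
    (Fmor : forall x y : sgraph V, sg_le x y -> Mor A (Fob x) (Fob y))
    (n : nat) : Mor A (cochain P Fob n) (cochain P Fob n.+1) :=
  \sum_(H : lvl P n) \sum_(H' : lvl P n.+1 | covers_in P (val H) (val H'))
     sgn (eps (val H) (val H'))
       (mcomp (bp_inj (fun K : lvl P n.+1 => Fob (val K)) H')
          (mcomp (Fmap Fmor (val H) (val H'))
                (bp_proj (fun K : lvl P n => Fob (val K)) H))).

Arguments is_functor {A V} P Fob Fmor.
Arguments differential {A V} P eps Fob Fmor n.

(* Main.v *)
Require Import Defs.
From HB Require Import structures.
From mathcomp Require Import all_boot all_algebra.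
Set Implicit Arguments. Unset Strict Implicit.
Import GRing.Theory.
Local Open Scope ring_scope.

Section Cat.
Variable A : AddCat.
Lemma mcomp0l a b c (g : Mor A a b) : mcomp (0 : Mor A b c) g = 0.
Proof. by apply: (addrI (mcomp (0 : Mor A b c) g)); rewrite -comp_addl !addr0. Qed.
Lemma mcomp0r a b c (g : Mor A b c) : mcomp g (0 : Mor A a b) = 0.
Proof. by apply: (addrI (mcomp g (0 : Mor A a b))); rewrite -comp_addr !addr0. Qed.
Lemma mcompNl a b c (f : Mor A b c) (g : Mor A a b) : mcomp (- f) g = - mcomp f g.
Proof. by apply: (addrI (mcomp f g)); rewrite -comp_addl !subrr mcomp0l. Qed.
Lemma mcompNr a b c (f : Mor A b c) (g : Mor A a b) : mcomp f (- g) = - mcomp f g.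
Proof. by apply: (addrI (mcomp f g)); rewrite -comp_addr !subrr mcomp0r. Qed.
Lemma mcomp_sgnl bb a b c (f : Mor A b c) (g : Mor A a b) : mcomp (sgn bb f) g = sgn bb (mcomp f g).
Proof. by case: bb; rewrite /sgn ?mcompNl. Qed.
Lemma mcomp_sgnr bb a b c (f : Mor A b c) (g : Mor A a b) : mcomp f (sgn bb g) = sgn bb (mcomp f g).
Proof. by case: bb; rewrite /sgn ?mcompNr. Qed.
Lemma mcomp_suml a b c (I : Type) (r : seq I) (Pr : pred I) (F : I -> Mor A b c) (g : Mor A a b) :
  mcomp (\sum_(i <- r | Pr i) F i) g = \sum_(i <- r | Pr i) mcomp (F i) g.
Proof.
apply: (big_rec2 (fun x y => mcomp y g = x)); first exact: mcomp0l.
by move=> i y1 y2 _ <-; rewrite comp_addl.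
Qed.
Lemma mcomp_sumr a b c (I : Type) (r : seq I) (Pr : pred I) (F : I -> Mor A a b) (g : Mor A b c) :
  mcomp g (\sum_(i <- r | Pr i) F i) = \sum_(i <- r | Pr i) mcomp g (F i).
Proof.
apply: (big_rec2 (fun x y => mcomp g y = x)); first exact: mcomp0r.
by move=> i y1 y2 _ <-; rewrite comp_addr.
Qed.
End Cat.

Lemma sgn_sgn (Z : zmodType) a b (x : Z) : sgn a (sgn b x) = sgn (a (+) b) x.
Proof. by case: a; case: b; rewrite /sgn ?opprK. Qed.
Lemma sgn0 (Z : zmodType) a : sgn a (0 : Z) = 0.
Proof. by case: a; rewrite /sgn ?oppr0. Qed.
Lemma sgn_sum (Z : zmodType) a (I : Type) (r : seq I) (Pr : pred I) (F : I -> Z) :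
  sgn a (\sum_(i <- r | Pr i) F i) = \sum_(i <- r | Pr i) sgn a (F i).
Proof. by case: a; rewrite /sgn ?sumrN. Qed.

Lemma FmapE (A : AddCat) (V : finType) (Fob : sgraph V -> Ob A)
    (Fmor : forall x y : sgraph V, sg_le x y -> Mor A (Fob x) (Fob y)) x y (h : sg_le x y) :
  Fmap Fmor x y = Fmor x y h.
Proof.
rewrite /Fmap. move: (erefl (sg_le x y)). move: {2 3}(sg_le x y) => b.
case: b => e. by rewrite (bool_irrelevance e h). by rewrite h in e.
Qed.

Lemma sg_le_trans (V : finType) (x y z : sgraph V) : sg_le x y -> sg_le y z -> sg_le x z.
Proof.
case/andP=> h1 h2 /andP[h3 h4]; apply/andP; split; [exact: subset_trans h1 h3 | exact: subset_trans h2 h4].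
Qed.

Lemma cover_lt (V : finType) (P : {set sgraph V}) x y : covers_in P x y -> sg_lt x y.
Proof. by case/and4P. Qed.
Lemma cover_le (V : finType) (P : {set sgraph V}) x y : covers_in P x y -> sg_le x y.
Proof. by move/cover_lt/andP=> []. Qed.

Lemma SG_cover_size (V : finType) (E : {set V * V}) x y :
  covers_in (SG E) x y -> gsize y = (gsize x).+1.
Proof.
case/and4P; rewrite !inE => sx sy /andP[/andP[l1 l2] nxy] /forall_inP nz.
case/andP: sx => sxE /forall_inP sxv.
case/andP: sy => syE /forall_inP syv.
case: x y l1 l2 nxy nz sxE sxv syE syv => [x1 x2] [y1 y2] /= l1 l2 nxy nz sxE sxv syE syv.
have [e1|ne1] := eqVneq x1 y1.
  subst y1.
  have : ~~ (y2 \subset x2).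
    apply/negP => s; move: nxy; suff -> : x2 = y2 by rewrite eqxx.
    by apply/eqP; rewrite eqEsubset l2 s.
  case/subsetPn => e ey ex.
  have zin : (x1, e |: x2) \in SG E.
    rewrite inE /is_subgraph /= subUset sub1set (subsetP syE _ ey) sxE /=.
    by apply/forall_inP => f; rewrite !inE => /orP[/eqP -> | /sxv //]; apply: syv.
  have ne : (x1, x2) != (x1, e |: x2).
    by apply/eqP => -[h]; move: ex; rewrite h setU11.
  have := nz _ zin; rewrite /sg_lt /sg_le /= subxx subsetUr subUset sub1set ey l2 /=.
  rewrite ne /= negbK => /eqP [<-].
  by rewrite /gsize /= cardsU1 ex addnS.
have : ~~ (y1 \subset x1).
  apply/negP => s; move: ne1; suff -> : x1 = y1 by rewrite eqxx.
  by apply/eqP; rewrite eqEsubset l1 s.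
case/subsetPn => v vy vx.
have zin : (v |: x1, x2) \in SG E.
  rewrite inE /is_subgraph /= sxE /=.
  by apply/forall_inP => f /sxv /andP[a b]; rewrite !inE a b !orbT.
have ne : (x1, x2) != (v |: x1, x2).
  by apply/eqP => -[h]; move: vx; rewrite h setU11.
have := nz _ zin; rewrite /sg_lt /sg_le /= subxx subsetUr subUset sub1set vy l1 l2 /=.
rewrite ne /= negbK => /eqP [<- <-].
by rewrite /gsize /= cardsU1 vx.
Qed.

Section Main.
Variables (A : AddCat) (V : finType) (E : {set V * V})
    (P : {set sgraph V}) (P_sub : P \subset SG E)
    (P_squared : squared P) (P_faithful : faithful E P)
    (eps : sgraph V -> sgraph V -> bool) (eps_sign : sign_assignment P eps)
    (Fob : sgraph V -> Ob A)
    (Fmor : forall x y : sgraph V, sg_le x y -> Mor A (Fob x) (Fob y))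
    (F_functor : is_functor P Fob Fmor).

Lemma minsize_le x : x \in P -> (minsize P <= gsize x)%N.
Proof.
move=> xP; rewrite /minsize.
elim: (index_enum _) (mem_index_enum x) => // a s IH; rewrite inE big_cons.
case/orP=> [/eqP <-|/IH h]; first by rewrite xP geq_minl.
by case: (a \in P) => //; apply: leq_trans h; rewrite geq_minr.
Qed.

Lemma cover_level x y : covers_in P x y -> level P y = (level P x).+1.
Proof.
move=> c; have /and4P[xP yP _ _] := c.
have c' : covers_in (SG E) x y by rewrite -P_faithful.
rewrite /level (SG_cover_size c') subSn //; exact: minsize_le.
Qed.

Lemma Fmap_comp x y z : covers_in P x y -> covers_in P y z ->
  mcomp (Fmap Fmor y z) (Fmap Fmor x y) = Fmap Fmor x z.
Proof.
move=> cxy cyz; have /and4P[xP yP _ _] := cxy; have /and4P[_ zP _ _] := cyz.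
have hxy := cover_le cxy; have hyz := cover_le cyz.
have hxz := sg_le_trans hxy hyz.
rewrite (FmapE _ hxy) (FmapE _ hyz) (FmapE _ hxz).
by case: F_functor => _ h; rewrite (h x y z hxy hyz hxz).
Qed.

Lemma pair_cancel n (Z : zmodType) (f : Z) x z :
  \sum_(y : lvl P n | covers_in P x (val y) && covers_in P (val y) z)
     sgn (eps x (val y) (+) eps (val y) z) f = 0.
Proof.
case: (pickP [pred y : lvl P n | covers_in P x (val y) && covers_in P (val y) z]);
  last by move=> none; rewrite big_pred0.
move=> y /andP[c1 c2].
have [y' [[ny' [c1' c2']] uniq']] := P_squared c1 c2.
have yP : (y' \in P) && (level P y' == n).
  have /and4P[_ -> _ _] := c1'.
  have /andP[_ /eqP yl] := valP y.
  by rewrite (cover_level c1') -(cover_level c1) yl /=.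
pose Y' : lvl P n := exist _ y' yP.
rewrite (bigD1 y) ?c1 ?c2 // (bigD1 Y') /=; last first.
  by rewrite c1' c2' /=; apply: contraNneq ny' => <-.
rewrite big1 ?addr0.
  rewrite (eps_sign c1 c2 c1' c2'); last by rewrite eq_sym.
  by case: (_ (+) _); rewrite /sgn /= ?subrr ?addNr.
move=> w /andP[/andP[/andP[d1 d2] nwy] nwY].
have h : y' = val w.
  apply: uniq'; split; last by split.
  by apply: contraNneq nwy => h; apply/eqP; apply: val_inj.
by case/negP: nwY; apply/eqP/val_inj; rewrite /= h.
Qed.

Lemma main n :
  mcomp (differential P eps Fob Fmor n.+1) (differential P eps Fob Fmor n) = 0.
Proof.
rewrite /differential mcomp_sumr big1 // => H _.
rewrite mcomp_sumr.
transitivity (\sum_(H' : lvl P n.+1 | covers_in P (val H) (val H'))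
   \sum_(K : lvl P n.+2 | covers_in P (val H') (val K))
     sgn (eps (val H) (val H') (+) eps (val H') (val K))
       (mcomp (bp_inj (fun K : lvl P n.+2 => Fob (val K)) K)
          (mcomp (Fmap Fmor (val H) (val K))
                (bp_proj (fun K : lvl P n => Fob (val K)) H)))).
  apply: eq_bigr => H' cHH'.
  rewrite mcomp_sgnr mcomp_suml (bigD1 H') //=.
  rewrite [X in _ + X]big1 ?addr0; last first.
    move=> K nK; rewrite mcomp_suml big1 // => K'' _.
    rewrite mcomp_sgnl.
    by rewrite -!Defs.compA (Defs.compA (bp_proj _ K)) bp_proj_inj0 // !(mcomp0l, mcomp0r) !sgn0.
  rewrite mcomp_suml sgn_sum; apply: eq_bigr => K cK.
  rewrite mcomp_sgnl sgn_sgn; congr sgn.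
  rewrite -!Defs.compA (Defs.compA (bp_proj _ H')) bp_proj_inj comp1m.
  by rewrite (Defs.compA (Fmap _ _ _)) (Fmap_comp cHH' cK).
rewrite (exchange_big_dep predT) //=.
by apply: big1 => K _; apply: pair_cancel.
Qed.
End Main.

Theorem theorem3p7 (A : AddCat) (V : finType) (E : {set V * V})
    (E_noloop : forall v : V, (v, v) \notin E)
    (P : {set sgraph V}) (P_sub : P \subset SG E)
    (P_squared : squared P) (P_faithful : faithful E P)
    (eps : sgraph V -> sgraph V -> bool) (eps_sign : sign_assignment P eps)
    (Fob : sgraph V -> Ob A)
    (Fmor : forall x y : sgraph V, sg_le x y -> Mor A (Fob x) (Fob y))
    (F_functor : is_functor P Fob Fmor) (n : nat) :
  mcomp (differential P eps Fob Fmor n.+1) (differential P eps Fob Fmor n) = 0%R.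
Proof. exact: (main P_squared P_faithful eps_sign F_functor). Qed.
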